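(* Let $X$ have a pdf $f$ satisfying Conditions (A) and (B) below. Then $$\lim_{\delta\to0}\Big[\mathrm{AoI}(S_{\mathrm z},Q_{\mathrm{uni}}^\delta,F_{\mathrm s})-\tfrac32 H[Q_{\mathrm{uni}}^\delta(X)]\Big]=0.$$
   Context: Let $X$ be a real random variable with pdf $f$. Condition (A): $f$ is continuous and differentiable, and its support is a bounded interval $I$. Condition (B): $\int_I f\log_2^2 f\,dx$ and $-\int_I f\log_2 f\,dx$ exist and are finite. The uniform quantizer $Q_{\mathrm{uni}}^\delta$ partitions $I$ into consecutive cells of length $\delta$. Let $p_i$ be the probability that $X$ lies in cell $i$, and $H[Q_{\mathrm{uni}}^\delta(X)]=-\sum_ip_i\log_2p_i$. The real-valued Shannon code $F_{\mathrm s}$ assigns length $l_i=-\log_2p_i$ to cell $i$, and $L=l_i$ when $X$ is in cell $i$. Under the zero-wait sampler, $\mathrm{AoI}(S_{\mathrm z},Q_{\mathrm{uni}}^\delta,F_{\mathrm s})=\frac{E[L^2]}{2E[L]}+E[L]$. *)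

(* Defs.v *)
From HB Require Import structures.
From mathcomp Require Import all_boot all_order all_algebra.
From mathcomp Require Import all_classical all_reals all_analysis.

Import Order.TTheory GRing.Theory Num.Theory.
Import numFieldNormedType.Exports.
Local Open Scope classical_set_scope.
Local Open Scope ring_scope.

Definition log2 {R : realType} (x : R) : R := ln x / ln 2.

Definition ncells {R : realType} (a b delta : R) : nat :=
  `|Num.ceil ((b - a) / delta)|%N.

(* index of the cell containing x in [a,b]: cells are consecutive intervals
   [a + k delta, a + (k+1) delta), the last one being closed at b (and
   possibly shorter than delta) *)
Definition cellidx {R : realType} (a b delta x : R) : nat :=
  minn (Num.truncn ((x - a) / delta)) (ncells a b delta).-1.

Definition cell {R : realType} (a b delta : R) (k : nat) : set R :=
  [set x | a <= x <= b /\ cellidx a b delta x = k].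

Definition cellprob {R : realType} {d} {T : measurableType d}
  (P : probability T R) (X : {RV P >-> R}) (a b delta : R) (k : nat) : R :=
  fine (P (X @^-1` cell a b delta k)).

Definition H_uni {R : realType} {d} {T : measurableType d}
  (P : probability T R) (X : {RV P >-> R}) (a b delta : R) : R :=
  - \sum_(k < ncells a b delta)
      cellprob P X a b delta k * log2 (cellprob P X a b delta k).

(* Shannon code: l_i = - log2 p_i; L = l_i when X is in cell i *)
Definition EL {R : realType} {d} {T : measurableType d}
  (P : probability T R) (X : {RV P >-> R}) (a b delta : R) : R :=
  \sum_(k < ncells a b delta)
      cellprob P X a b delta k * (- log2 (cellprob P X a b delta k)).

Definition EL2 {R : realType} {d} {T : measurableType d}
  (P : probability T R) (X : {RV P >-> R}) (a b delta : R) : R :=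
  \sum_(k < ncells a b delta)
      cellprob P X a b delta k * (- log2 (cellprob P X a b delta k)) ^+ 2.

Definition AoI_z_uni_s {R : realType} {d} {T : measurableType d}
  (P : probability T R) (X : {RV P >-> R}) (a b delta : R) : R :=
  EL2 P X a b delta / (2 * EL P X a b delta) + EL P X a b delta.

(* Main.v *)
Require Import Defs.
From HB Require Import structures.
From mathcomp Require Import all_boot all_order all_algebra.
From mathcomp Require Import all_classical all_reals all_analysis.
From mathcomp Require Import ring lra zify.
Import Order.TTheory GRing.Theory Num.Theory.
Import numFieldNormedType.Exports.
Local Open Scope classical_set_scope.
Local Open Scope ring_scope.


Section Alg.
Variable R : realType.

Lemma ulog_bound (M u : R) : 1 <= M -> 0 < u -> u <= M ->
  u * ln u ^+ 2 <= 4 + M ^+ 3.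
Proof.
move=> M1 u0 uM.
have [u1|u1] := leP u 1.
- set s := Num.sqrt u.
  have s0 : 0 < s by rewrite sqrtr_gt0.
  have ss : s * s = u by rewrite -expr2 sqr_sqrtr // ltW.
  have lnu : ln u = ln s + ln s by rewrite -ss lnM // posrE.
  have s1 : s <= 1 by rewrite -sqrtr1 ler_sqrt.
  have lns0 : ln s <= 0 by apply: ln_le0.
  have h : ln (s^-1) <= s^-1 - 1.
    have := @le_ln1Dx R (s^-1 - 1); rewrite addrCA subrr addr0; apply.
    have : 0 < s^-1 by rewrite invr_gt0.
    lra.
  rewrite lnV ?posrE // in h.
  have si : s * s^-1 = 1 by rewrite mulfV // gt_eqF.
  have hh : - ln s * s <= 1 - s.
    by have := ler_wpM2r (ltW s0) h; rewrite mulrBl mulVf ?gt_eqF // mul1r.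
  have M3 : 0 <= M ^+ 3 by rewrite exprn_ge0 // (le_trans ler01).
  rewrite lnu -ss.
  have : 0 <= - ln s * s by rewrite mulr_ge0 // ?oppr_ge0 // ltW.
  nra.
- have l0 : 0 <= ln u by apply: ln_ge0; exact: ltW.
  have l1 : ln u <= u - 1.
    have := @le_ln1Dx R (u - 1); rewrite addrCA subrr addr0; apply; lra.
  have : ln u ^+ 2 <= M ^+ 2.
    rewrite ler_sqr ?nnegrE //; [lra | lra].
  rewrite !exprS expr0 !mulr1 => h.
  have : u * (ln u * ln u) <= M * (M * M).
    apply: ler_pM => //; [exact: ltW | nra].
  lra.
Qed.

Lemma sum_sq_id N (p l : 'I_N -> R) (c : R) : \sum_k p k = 1 ->
  \sum_k p k * (l k - c) ^+ 2 =
  \sum_k p k * l k ^+ 2 - 2 * c * \sum_k p k * l k + c ^+ 2.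
Proof.
move=> p1.
have -> : \sum_k p k * (l k - c) ^+ 2 =
  \sum_k (p k * l k ^+ 2 - 2 * c * (p k * l k) + c ^+ 2 * p k).
  by apply: eq_bigr => k _; ring.
by rewrite big_split /= sumrB -!mulr_sumr p1 mulr1.
Qed.

Lemma ln2_gt0 : 0 < ln (2 : R).
Proof. by apply: ln_gt0; rewrite ltr1n. Qed.

Lemma sum_bounds N (p : 'I_N -> R) (M δ : R) :
  0 < δ -> 1 <= M -> (forall k, 0 <= p k) -> \sum_k p k = 1 ->
  (forall k, p k <= M * δ) ->
  let L1 := \sum_k p k * (- log2 (p k)) in
  let L2 := \sum_k p k * (- log2 (p k)) ^+ 2 in
  [/\ 0 <= L2 - L1 ^+ 2,
      L2 - L1 ^+ 2 <= N%:R * (δ * ((4 + M ^+ 3) / ln 2 ^+ 2)) &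
      - log2 (M * δ) <= L1].
Proof.
move=> d0 M1 p0 p1 pM L1 L2.
have l2 := @ln2_gt0.
have id := @sum_sq_id N p (fun k => - log2 (p k)) ^~ p1.
split.
- have := id L1; rewrite -/L1 -/L2 => e.
  have : 0 <= \sum_k p k * (- log2 (p k) - L1) ^+ 2.
    by apply: sumr_ge0 => k _; rewrite mulr_ge0 // sqr_ge0.
  rewrite e; lra.
- have := id (- log2 δ); rewrite -/L1 -/L2 => e.
  have h : \sum_k p k * (- log2 (p k) - - log2 δ) ^+ 2 <=
      N%:R * (δ * ((4 + M ^+ 3) / ln 2 ^+ 2)).
    have -> : N%:R * (δ * ((4 + M ^+ 3) / ln 2 ^+ 2)) =
       \sum_(k < N) (δ * ((4 + M ^+ 3) / ln 2 ^+ 2)).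
      by rewrite sumr_const card_ord mulr_natl.
    apply: ler_sum => k _.
    have [pk0|pk0] := eqVneq (p k) 0.
      rewrite pk0 mul0r; apply: mulr_ge0; first exact: ltW.
      apply: divr_ge0; last exact: sqr_ge0.
      by rewrite addr_ge0 // exprn_ge0 // (le_trans ler01).
    have pk : 0 < p k by rewrite lt_neqAle eq_sym pk0 p0.
    set u := p k / δ.
    have u0 : 0 < u by rewrite divr_gt0.
    have uM : u <= M by rewrite ler_pdivrMr.
    have pe : p k = δ * u by rewrite /u mulrC divfK // gt_eqF.
    have le : - log2 (p k) - - log2 δ = - (ln u / ln 2).
      rewrite /log2 /u lnM ?posrE ?invr_gt0 // lnV ?posrE //; field.
      by rewrite gt_eqF.
    rewrite le sqrrN pe expr_div_n.
    have := @ulog_bound M u M1 u0 uM.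
    have : 0 < ln (2:R) ^+ 2 by rewrite expr2 mulr_gt0.
    move=> h2 hb.
    rewrite -mulrA ler_pM2l // mulrA ler_pM2r ?invr_gt0 //.
  have : 0 <= (L1 - - log2 δ) ^+ 2 by apply: sqr_ge0.
  move: h; rewrite e. lra.
- rewrite /L1.
  have -> : - log2 (M * δ) = \sum_k p k * (- log2 (M * δ)).
    by rewrite -mulr_suml p1 mul1r.
  apply: ler_sum => k _.
  have [pk0|pk0] := eqVneq (p k) 0; first by rewrite pk0 !mul0r.
  have pk : 0 < p k by rewrite lt_neqAle eq_sym pk0 p0.
  rewrite ler_pM2l // lerN2 /log2 ler_pM2r ?invr_gt0 //.
  have Md : 0 < M * δ by rewrite mulr_gt0 // (lt_le_trans ltr01).
  by rewrite ler_ln ?posrE.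
Qed.
End Alg.


Section Cells.
Variable R : realType.
Variables (a b δ : R).
Hypothesis ab : a < b.
Hypothesis d0 : 0 < δ.

Let N := ncells a b δ.

Lemma ncells_prop : (0 < N)%N /\ (N%:R - 1) * δ < b - a /\ b - a <= N%:R * δ.
Proof.
have y0 : 0 < (b - a) / δ by rewrite divr_gt0 // subr_gt0.
have c0 : 0 < Num.ceil ((b - a) / δ) by rewrite ceil_gt0.
have eN : N%:R = (Num.ceil ((b - a) / δ))%:~R :> R.
  by rewrite /N /ncells natr_absz gtr0_norm.
have := ceil_itv ((b - a) / δ); rewrite -eN intrB /= -eN => /andP[h1 h2].
split.
  rewrite /N /ncells; move: c0; case: (Num.ceil _) => // n; by case: n.
by rewrite -ltr_pdivlMr // -ler_pdivrMr.
Qed.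

Lemma cellidx_lt x : (cellidx a b δ x < N)%N.
Proof.
have [N0 _] := ncells_prop.
rewrite /cellidx -/N; lia.
Qed.

Lemma cell_sub k x : cell a b δ k x ->
  a + k%:R * δ <= x <= a + k.+1%:R * δ.
Proof.
case=> /andP[ax xb]; rewrite /cellidx -/N => e.
have [N0 [_ hN]] := ncells_prop.
have y0 : 0 <= (x - a) / δ by rewrite divr_ge0 // ?subr_ge0 // ltW.
have kt : (k <= Num.truncn ((x - a) / δ))%N by lia.
rewrite truncn_ge_nat // ler_pdivlMr // in kt.
apply/andP; split; first lra.
have [tk|kN] : (Num.truncn ((x - a) / δ) = k \/ k = N.-1)%N by lia.
  have := truncnS_gt ((x - a) / δ); rewrite tk ltr_pdivrMr // => h; lra.
have -> : k.+1 = N by lia.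
lra.
Qed.

Lemma cell_meas k : measurable (cell a b δ k).
Proof.
have [N0 _] := ncells_prop.
set g := fun x : R => (x - a) / δ.
have mg : measurable_fun setT g.
  rewrite /g; apply: (measurableT_comp (measurable_realfun.mulrr_measurable _)).
  by apply: measurable_realfun.measurable_funB.
have mp : forall Y : set R, measurable Y -> measurable (g @^-1` Y).
  by move=> Y mY; have := mg measurableT Y mY; rewrite setTI.
have ab' : measurable [set x : R | a <= x <= b].
  have -> : [set x : R | a <= x <= b] = [set` `[a, b]] by [].
  exact: measurable_itv.
have [kN|kN] := ltnP k N; last first.
  have -> : cell a b δ k = set0; last by [].
  apply/seteqP; split => x // [_ e].
  have := cellidx_lt x; rewrite e -/N; lia.
have [k1|k1] := ltnP k.+1 N.
  have -> : cell a b δ k = [set x : R | a <= x <= b] `&`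
     g @^-1` [set` `[k%:R, k.+1%:R[].
    apply/seteqP; split => x [h1 h2]; split => //.
      have y0 : 0 <= g x by case/andP: h1 => h _; apply: divr_ge0; [rewrite subr_ge0 | exact: ltW].
      move: h2; rewrite /cellidx -/N -/(g x) => e /=.
      rewrite in_itv /= -truncn_ge_nat // -truncn_lt_nat //; apply/andP; lia.
    have y0 : 0 <= g x by case/andP: h1 => h _; apply: divr_ge0; [rewrite subr_ge0 | exact: ltW].
    move: h2; rewrite /= in_itv /= -truncn_ge_nat // -truncn_lt_nat // => /andP[].
    rewrite /cellidx -/N -/(g x); lia.
  by apply: measurableI => //; apply: mp; exact: measurable_itv.
have -> : cell a b δ k = [set x : R | a <= x <= b] `&`
     g @^-1` [set` `[k%:R, +oo[].
  apply/seteqP; split => x [h1 h2]; split => //.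
    have y0 : 0 <= g x by case/andP: h1 => h _; apply: divr_ge0; [rewrite subr_ge0 | exact: ltW].
    move: h2; rewrite /cellidx -/N -/(g x) => e /=.
    rewrite in_itv /= andbT -truncn_ge_nat //; lia.
  have y0 : 0 <= g x by case/andP: h1 => h _; apply: divr_ge0; [rewrite subr_ge0 | exact: ltW].
  move: h2; rewrite /= in_itv /= andbT -truncn_ge_nat // => h.
  rewrite /cellidx -/N -/(g x); lia.
by apply: measurableI => //; apply: mp; exact: measurable_itv.
Qed.

End Cells.


Lemma probpart (R : realType) (d : measure_display) (T : measurableType d)
  (P : probability T R) (X : {RV P >-> R}) (f : R -> R) (a b M : R) :
  (forall x, 0 <= f x) ->
  measurable_fun setT f ->
  (forall A : set R, measurable A ->
     distribution P X A = (\int[lebesgue_measure]_(x in A) (f x)%:E)%E) ->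
  a < b ->
  (forall x, ~ (a <= x <= b) -> f x = 0) ->
  (forall x, f x <= M) ->
  forall δ, 0 < δ ->
  (forall k, 0 <= cellprob P X a b δ k) /\
  (\sum_(k < ncells a b δ) cellprob P X a b δ k = 1) /\
  (forall k, cellprob P X a b δ k <= M * δ).
Proof.
move=> f0 mf dist ab fout fM δ d0.
have mc : forall k, measurable (X @^-1` cell a b δ k).
  by move=> k; apply: measurable_funPTI; apply: cell_meas.
have fin : forall k, P (X @^-1` cell a b δ k) \is a fin_num.
  by move=> k; apply: fin_num_measure.
split; first by move=> k; apply: fine_ge0.
split.
- have Pab : P (X @^-1` [set x | a <= x <= b]) = 1%E.
    have e1 := dist [set` `[a, b]] (measurable_itv _).
    have e2 := dist setT measurableT.
    rewrite /distribution /pushforward /= in e1 e2.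
    rewrite preimage_setT probability_setT in e2.
    have -> : [set x | a <= x <= b] = [set` `[a, b]].
      by apply/seteqP; split => x; rewrite /= in_itv.
    rewrite e1 e2 integral_mkcond; apply: eq_integral => x _.
    rewrite /patch; case: ifPn => // h.
    rewrite fout //; move: h; rewrite notin_setE /= in_itv /= => h; exact: h.
  apply: EFin_inj; rewrite /cellprob EFin_sum_fine; last by move=> k _; apply: fin.
  rewrite -measure_bigsetU_ord //; last first.
    move=> i j _ _ [w [[_ ei] [_ ej]]]; apply: val_inj => /=.
    by rewrite -ei -ej.
  rewrite -(bigcup_mkord _ (fun k => X @^-1` cell a b δ k)) -Pab; congr (P _).
  apply/seteqP; split => w.
    by move=> [k _ [h _]].
  move=> h; exists (cellidx a b δ (X w)); first by apply: cellidx_lt.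
  by split.
- move=> k.
  set J := [set` `[a + k%:R * δ, a + k.+1%:R * δ]].
  have mJ : measurable J by apply: measurable_itv.
  have le1 : (P (X @^-1` cell a b δ k) <= P (X @^-1` J))%E.
    apply: le_measure; rewrite ?inE //; first exact: measurable_funPTI.
    move=> w /cell_sub h; rewrite /J /= in_itv /=; exact: h.
  have e1 : P (X @^-1` J) = (\int[lebesgue_measure]_(x in J) (f x)%:E)%E.
    by rewrite -dist.
  have le2 : (\int[lebesgue_measure]_(x in J) (f x)%:E <=
       \int[lebesgue_measure]_(x in J) (cst M%:E x))%E.
    apply: ge0_le_integral => //.
    - by move=> x _; rewrite lee_fin.
    - by apply/measurable_realfun.measurable_EFinP; apply: measurable_funTS.
    - by move=> x _; rewrite lee_fin.
  have kk : a + k%:R * δ < a + k.+1%:R * δ.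
    by rewrite ltrD2l ltr_pM2r // ltr_nat.
  have e3 : a + k.+1%:R * δ - (a + k%:R * δ) = δ.
    by rewrite -natr1; ring.
  have lJ : lebesgue_measure J = δ%:E.
    by rewrite lebesgue_measure_itv /= lte_fin kk -EFinB e3.
  rewrite integral_cst // in le2.
  have le3 : (M%:E * lebesgue_measure J <= (M * δ)%:E)%E.
    by rewrite lJ EFinM.
  rewrite /cellprob -lee_fin fineK //.
  by apply: (le_trans le1); rewrite e1; apply: (le_trans le2); exact: le3.
Qed.

Theorem lemma3 (R : realType) (d : measure_display) (T : measurableType d)
  (P : probability T R) (X : {RV P >-> R}) (f : R -> R) (a b : R) :
  (* f is a pdf of X *)
  (forall x, 0 <= f x) ->
  measurable_fun setT f ->
  (forall A : set R, measurable A ->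
     distribution P X A = (\int[lebesgue_measure]_(x in A) (f x)%:E)%E) ->
  (* Condition (A): f continuous and differentiable, support = bounded interval I = [a,b] *)
  a < b ->
  closure [set x | 0 < f x] = [set` `[a, b]] ->
  {within [set` `[a, b]], continuous f} ->
  (forall x, a < x < b -> derivable f x 1) ->
  (* Condition (B) *)
  lebesgue_measure.-integrable [set` `[a, b]] (fun x => (f x * log2 (f x) ^+ 2)%:E) ->
  lebesgue_measure.-integrable [set` `[a, b]] (fun x => (- (f x * log2 (f x)))%:E) ->
  (fun delta => AoI_z_uni_s P X a b delta - 3 / 2 * H_uni P X a b delta)
    @ 0^'+ --> 0.
Proof.
move=> f0 mf dist ab supp fc _ _ _.
have [c cab fcM] := EVT_max (ltW ab) fc.
set M := 1 + f c.
have M1 : 1 <= M by rewrite lerDl f0.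
have M0 : 0 < M by apply: (lt_le_trans ltr01).
have fout : forall x, ~ (a <= x <= b) -> f x = 0.
  move=> x nx; apply/eqP; rewrite eq_le f0 andbT leNgt; apply/negP => fx.
  apply: nx; have : closure [set x | 0 < f x] x by apply: subset_closure.
  by rewrite supp /= in_itv.
have fM : forall x, f x <= M.
  move=> x; case: (boolP (a <= x <= b)) => h.
    apply: (le_trans (fcM x _)); first by rewrite in_itv.
    by rewrite /M lerDr.
  by rewrite fout ?(ltW M0) //; apply/negP.
have pp := @probpart R d T P X f a b M f0 mf dist ab fout fM.
have l2 : 0 < ln (2:R) by apply: ln_gt0; rewrite ltr1n.
set C := (4 + M ^+ 3) / ln 2 ^+ 2.
have C0 : 0 <= C.
  apply: divr_ge0; last exact: sqr_ge0.
  by rewrite addr_ge0 // exprn_ge0 // ltW.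
set K := (b - a + 1) * C.
have K0 : 0 <= K by rewrite mulr_ge0 // addr_ge0 // subr_ge0 ltW.
apply/cvgr0Pnorm_lt => e e0.
set T0 := ln 2 * (K / (2 * e) + 1).
have eT : 0 < expR (- T0) / M by rewrite divr_gt0 // expR_gt0.
near=> δ.
have d0 : 0 < δ by near: δ; apply: nbhs_right_gt.
have d1 : δ < 1 by near: δ; apply: nbhs_right_lt; exact: ltr01.
have dM : δ < expR (- T0) / M by near: δ; apply: nbhs_right_lt.
have [p0 [p1 pM]] := pp δ d0.
have [V0 VK HL] := @sum_bounds R _ _ M δ d0 M1 p0 p1 pM.
have [N0 [NB _]] := @ncells_prop R a b δ ab d0.
have eH : H_uni P X a b δ = EL P X a b δ.
  by rewrite /H_uni /EL -sumrN; apply: eq_bigr => k _; rewrite mulrN.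
have Md : 0 < M * δ by rewrite mulr_gt0.
have lnMd : ln (M * δ) < - T0.
  rewrite -[X in _ < X]expRK ltr_ln ?posrE ?expR_gt0 //.
  by rewrite mulrC -ltr_pdivlMr.
have h : K / (2 * e) + 1 < - log2 (M * δ).
  rewrite /log2 -mulNr ltr_pdivlMr // mulrC.
  rewrite /T0 in lnMd; lra.
rewrite /AoI_z_uni_s eH.
rewrite /EL /EL2 in VK V0 HL *.
set L2 := \sum_(k < ncells a b δ) _ in VK V0 HL *.
set L1 := \sum_(k < ncells a b δ) _ in VK V0 HL *.
have Ke : 0 <= K / (2 * e) by rewrite divr_ge0 // mulr_ge0 // ltW.
have L10 : 0 < L1 by lra.
have -> : L2 / (2 * L1) + L1 - 3 / 2 * L1 = (L2 - L1 ^+ 2) / (2 * L1).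
  by field; rewrite gt_eqF.
have VK' : L2 - L1 ^+ 2 <= K.
  apply: (le_trans VK); rewrite mulrA /K ler_wpM2r //.
  have : (ncells a b δ)%:R * δ < b - a + δ by lra.
  lra.
rewrite ger0_norm; last by rewrite divr_ge0 // mulr_ge0 // ltW.
rewrite ltr_pdivrMr ?mulr_gt0 //.
have : K < 2 * e * L1.
  have : K / (2 * e) < L1 by lra.
  by rewrite ltr_pdivrMr ?mulr_gt0 // mulrC.
lra.
Unshelve. all: by end_near.
Qed.
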